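(* Let $V$ be a finite set, $E\subseteq V\times V$ a reflexive symmetric relation, $\mathcal{S}$ the collection of connected subsets of $V$ (as defined in the context), $\mu$ an additive measure on $2^V$ with $\mu(S)=0$ only for $S=\emptyset$, and $S^*\in\mathcal{S}\cup\{\emptyset\}$. Let $P_0$ be a valid partition of $V$. Then there exists a valid partition coarser than $P_0$ under which the percentile of $S^*$ is strictly less than (respectively, strictly greater than) the percentile of $S^*$ under $P_0$ if and only if there exist $l$ large, $m$ medium and $s$ small blocks of $P_0$ (blocks other than $S^*$), with $l+m+s\ge 2$, whose union lies in $\mathcal{S}$ and such that $$\frac{l+0.5m-1}{l+m+s-1}$$ is strictly greater than (respectively, strictly less than) the percentile of $S^*$ under $P_0$.
   Context: $G=(V,E)$ is viewed as a simple undirected graph. $\mathcal{S}$ is the set of nonempty $S\subseteq V$ that are connected: for every partition $S=A\sqcup B$ with $A,B\neq\emptyset$ there exist $a\in A$, $b\in B$ with $(a,b)\in E$. $\mu:2^V\to[0,\infty)$ satisfies $\mu(S)=\sum_{s\in S}\mu(\{s\})$. A valid partition is a partition $(S_1,\dots,S_c,S^* )$ of $V$ with $S_1,\dots,S_c\in\mathcal{S}$. The percentile of $S^*$ under it is $\frac{|\{i:\mu(S_i)>\mu(S^* )\}|+0.5|\{i:\mu(S_i)=\mu(S^* )\}|+0.5}{c+1}$. A set $S\in\mathcal{S}\setminus\{S^*\}$ is large if $\mu(S)>\mu(S^* )$, medium if $\mu(S)=\mu(S^* )$, small if $\mu(S)<\mu(S^* )$. A valid partition is coarser than $P_0$ if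 it still contains $S^*$ as a block and each of its other blocks is a union of blocks of $P_0$. *)

(* Defs.v *)
From mathcomp Require Import all_boot all_order all_algebra.
Set Implicit Arguments. Unset Strict Implicit. Unset Printing Implicit Defensive.
Import Order.TTheory GRing.Theory Num.Theory.
Local Open Scope ring_scope.

Section Defs.
Variable T : finType.

Definition connected_set (E : rel T) (S : {set T}) : Prop :=
  S != set0 /\
  forall A B : {set T}, A :|: B = S -> [disjoint A & B] -> A != set0 -> B != set0 ->
    exists a, exists b, [/\ a \in A, b \in B & E a b].

(* A valid partition (S_1,...,S_c,Sstar) of V is represented by the set P of the
   blocks S_1,...,S_c: they partition the complement of Sstar and are connected. *)
Definition valid_partition (E : rel T) (Sstar : {set T}) (P : {set {set T}}) : Prop :=
  partition P (~: Sstar) /\ forall S, S \in P -> connected_set E S.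

Variable R : realFieldType.

Definition large_blocks (mu : {set T} -> R) Sstar (P : {set {set T}}) :=
  [set S in P | mu Sstar < mu S].
Definition medium_blocks (mu : {set T} -> R) Sstar (P : {set {set T}}) :=
  [set S in P | mu S == mu Sstar].
Definition small_blocks (mu : {set T} -> R) Sstar (P : {set {set T}}) :=
  [set S in P | mu S < mu Sstar].

Definition percentile (mu : {set T} -> R) Sstar (P : {set {set T}}) : R :=
  ((#|large_blocks mu Sstar P|)%:R + 2^-1 * (#|medium_blocks mu Sstar P|)%:R + 2^-1)
  / (#|P|.+1)%:R.

(* P is coarser than P0: every block of P is a union of blocks of P0
   (Sstar is a block of both by construction). *)
Definition coarser (P P0 : {set {set T}}) : Prop :=
  forall B, B \in P -> exists Q : {set {set T}}, Q \subset P0 /\ B = cover Q.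

End Defs.

(* Main.v *)
Require Import Defs.
From mathcomp Require Import all_boot all_order all_algebra.
From mathcomp Require Import ring lra.
Import Order.TTheory GRing.Theory Num.Theory.
Set Implicit Arguments. Unset Strict Implicit.
Local Open Scope ring_scope.

Section Pf.
Variables (T : finType) (E : rel T) (R : realFieldType) (mu : {set T} -> R)
  (Sstar : {set T}) (P0 : {set {set T}}).
Hypotheses (mu_ge0 : forall S : {set T}, 0 <= mu S)
  (mu_add : forall S : {set T}, mu S = \sum_(s in S) mu [set s])
  (mu_0 : forall S : {set T}, mu S = 0 -> S = set0)
  (vP0 : valid_partition E Sstar P0).

Definition w (S : {set T}) : R :=
  (nat_of_bool (mu Sstar < mu S))%:R + 2^-1 * (nat_of_bool (mu S == mu Sstar))%:R.

Lemma card_sum (X : {set {set T}}) (p : pred {set T}) :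
  (#|[set S in X | p S]|)%:R = \sum_(S in X) ((nat_of_bool (p S))%:R : R).
Proof.
rewrite -sum1_card natr_sum big_mkcond /= [RHS]big_mkcond /=.
by apply: eq_bigr => S _; rewrite inE; case: (S \in X); case: (p S).
Qed.

Lemma sumw X : (#|large_blocks mu Sstar X|)%:R + 2^-1 * (#|medium_blocks mu Sstar X|)%:R
   = \sum_(S in X) w S.
Proof.
by rewrite /large_blocks /medium_blocks !card_sum mulr_sumr -big_split.
Qed.

Lemma percE X : percentile mu Sstar X = (\sum_(S in X) w S + 2^-1) / (#|X|.+1)%:R.
Proof. by rewrite /percentile sumw. Qed.

Lemma w_cases S : (mu Sstar < mu S /\ w S = 1) \/ (~~ (mu Sstar < mu S) /\ w S <= 2^-1).
Proof.
rewrite /w; case: (ltgtP (mu S) (mu Sstar)) => H.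
- by right; split => //; rewrite /= mulr0 addr0 invr_ge0 ler0n.
- by left; split => //; rewrite mulr0 addr0.
- by right; split => //; rewrite /= mulr1 add0r.
Qed.

Lemma w_ge0 S : 0 <= w S.
Proof. by rewrite /w addr_ge0 // mulr_ge0 // invr_ge0 ler0n. Qed.

Lemma w_le1 S : w S <= 1.
Proof.
have [[_ ->]|[_ H]] := w_cases S => //.
apply: (le_trans H); rewrite invf_le1 ?ltr0n // ler1n //.
Qed.

Lemma w_small S : mu S < mu Sstar -> w S = 0.
Proof. by rewrite /w => H; rewrite ltNge (ltW H) /= (lt_eqF H) mulr0 addr0. Qed.

Lemma mu_gt0 S : S != set0 -> 0 < mu S.
Proof. by move=> H; rewrite lt_def mu_ge0 andbT; apply: contra H => /eqP /mu_0 ->. Qed.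

Lemma mu_sub (A B : {set T}) : A \subset B -> (B :\: A) != set0 -> mu A < mu B.
Proof.
move=> AB nz; rewrite [mu B]mu_add (big_setID A) /= (setIidPr AB) -!mu_add.
by rewrite ltrDl mu_gt0.
Qed.

Lemma cP0 : cover P0 = ~: Sstar.
Proof. by case: vP0 => /and3P[/eqP]. Qed.
Lemma tP0 : trivIset P0.
Proof. by case: vP0 => /and3P[]. Qed.
Lemma nP0 : set0 \notin P0.
Proof. by case: vP0 => /and3P[]. Qed.

Lemma nz_block (P : {set {set T}}) A : set0 \notin P -> A \in P -> A != set0.
Proof. by move=> n AP; apply: contraNneq n => <-. Qed.

Lemma same_block (P : {set {set T}}) A A' x : trivIset P -> A \in P -> A' \in P ->
  x \in A -> x \in A' -> A = A'.
Proof. by move=> t AP A'P xA xA'; rewrite -(def_pblock t AP xA) (def_pblock t A'P xA'). Qed.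

Lemma sub_block (X : {set {set T}}) A : X \subset P0 -> A \in P0 -> A \subset cover X -> A \in X.
Proof.
move=> XP AP AX; case/set0Pn: (nz_block nP0 AP) => x xA.
have /bigcupP[A' A'X xA'] := subsetP AX x xA.
by rewrite (same_block tP0 AP (subsetP XP A' A'X) xA xA').
Qed.

Lemma mu_lt_cover (Q : {set {set T}}) A : Q \subset P0 -> (2 <= #|Q|)%N -> A \in Q -> mu A < mu (cover Q).
Proof.
move=> QP cQ AQ.
have : (0 < #|Q :\ A|)%N by move: cQ; rewrite (cardsD1 A) AQ.
case/card_gt0P => A' /setD1P[nA'A A'Q].
have A'P := subsetP QP A' A'Q; have AP := subsetP QP A AQ.
case/set0Pn: (nz_block nP0 A'P) => y yA'.
apply: mu_sub; first by apply: (bigcup_sup A AQ).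
apply/set0Pn; exists y; rewrite inE; apply/andP; split.
  apply: contra nA'A => yA; apply/eqP; exact: (same_block tP0 A'P AP yA' yA).
by apply/bigcupP; exists A'.
Qed.

Definition Gq (p0 : R) (Q : {set {set T}}) : R :=
  \sum_(A in Q) w A - w (cover Q) - p0 * ((#|Q|)%:R - 1).
Definition Fq (p0 : R) (Q : {set {set T}}) : R :=
  \sum_(A in Q) w A - 1 - p0 * ((#|Q|)%:R - 1).

Lemma sign_GF p0 (Q : {set {set T}}) : 0 < p0 -> Q \subset P0 -> (2 <= #|Q|)%N ->
  (0 < Gq p0 Q <-> 0 < Fq p0 Q) /\ (Gq p0 Q < 0 <-> Fq p0 Q < 0).
Proof.
move=> p0pos QP cQ; rewrite /Gq /Fq.
have [[_ ->]|[nl wle]] := w_cases (cover Q); first by [].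
have s0 : \sum_(A in Q) w A = 0.
  apply: big1 => A AQ; apply: w_small.
  by apply: (lt_le_trans (mu_lt_cover QP cQ AQ)); rewrite leNgt.
have d1 : 1 <= (#|Q|)%:R - 1 :> R.
  by rewrite lerBrDr (_ : 1 + 1 = 2%:R) // ler_nat.
have pd : 0 < p0 * ((#|Q|)%:R - 1) by rewrite mulr_gt0 // (lt_le_trans ltr01 d1).
have wg := w_ge0 (cover Q).
rewrite s0; split; split => H; lra.
Qed.

Lemma unique_B (P : {set {set T}}) A : valid_partition E Sstar P -> coarser P P0 ->
  A \in P0 -> exists B, [/\ B \in P, A \subset B &
     forall B', B' \in P -> A \subset B' -> B' = B].
Proof.
case=> /and3P[/eqP cP tP nP] _ coP AP.
case/set0Pn: (nz_block nP0 AP) => x xA.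
have : x \in cover P by rewrite cP -cP0; apply/bigcupP; exists A.
case/bigcupP => B BP xB; exists B; split => //.
  have [Q' [Q'P EB]] := coP B BP.
  move: (xB); rewrite EB => /bigcupP[A' A'Q' xA'].
  rewrite (same_block tP0 AP (subsetP Q'P _ A'Q') xA xA'); exact: bigcup_sup.
move=> B' B'P AB'; exact: (same_block tP B'P BP (subsetP AB' x xA) xB).
Qed.

Lemma exch (P : {set {set T}}) (h : {set T} -> R) : valid_partition E Sstar P -> coarser P P0 ->
  \sum_(B in P) \sum_(A in P0 | A \subset B) h A = \sum_(A in P0) h A.
Proof.
move=> vP coP.
under eq_bigr do rewrite big_mkcondr /=.
rewrite exchange_big /=; apply: eq_bigr => A AP; rewrite -big_mkcondr /=.
have [B [BP AB uq]] := unique_B vP coP AP.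
rewrite (eq_bigl (fun B' => B' == B)); first by rewrite big_pred1_eq.
by move=> B'; apply/andP/eqP => [[? ?]|->]; [exact: uq | split].
Qed.

Lemma sum_G (P : {set {set T}}) : valid_partition E Sstar P -> coarser P P0 ->
  \sum_(B in P) Gq (percentile mu Sstar P0) [set A in P0 | A \subset B]
  = percentile mu Sstar P0 * (#|P|.+1)%:R - (\sum_(B in P) w B + 2^-1).
Proof.
move=> vP coP; set p0 := percentile mu Sstar P0.
have cov B : B \in P -> cover [set A in P0 | A \subset B] = B.
  move=> BP; have [Q' [Q'P EB]] := coP B BP.
  apply/setP => x; apply/bigcupP/idP => [[A] | xB].
    by rewrite inE => /andP[_ AB] /(subsetP AB).
  move: (xB); rewrite {1}EB => /bigcupP[A AQ' xA]; exists A => //.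
  rewrite inE (subsetP Q'P _ AQ') /= EB; exact: bigcup_sup.
transitivity (\sum_(B in P) (\sum_(A in P0 | A \subset B) w A - w B
      - p0 * (\sum_(A in P0 | A \subset B) 1 - 1))).
  apply: eq_bigr => B BP; rewrite /Gq cov //.
  have eqS (F : {set T} -> R) : \sum_(A in [set A in P0 | A \subset B]) F A
      = \sum_(A in P0 | A \subset B) F A by apply: eq_bigl => A; rewrite inE.
  rewrite eqS -sum1_card natr_sum eqS //.
rewrite !sumrB -mulr_sumr sumrB !exch // !sumr_const.
have hp : p0 * (#|P0|.+1)%:R = \sum_(A in P0) w A + 2^-1.
  by rewrite /p0 percE divfK // pnatr_eq0.
move: hp; rewrite -!natr1 => hp.
rewrite -[1 *+ #|P|]/(#|P|%:R) -[1 *+ #|P0|]/(#|P0|%:R).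
lra.
Qed.

Lemma cov_QB (P : {set {set T}}) B : coarser P P0 -> B \in P ->
  cover [set A in P0 | A \subset B] = B.
Proof.
move=> coP BP; have [Q' [Q'P EB]] := coP B BP.
apply/setP => x; apply/bigcupP/idP => [[A] | xB].
  by rewrite inE => /andP[_ AB] /(subsetP AB).
move: (xB); rewrite {1}EB => /bigcupP[A AQ' xA]; exists A => //.
rewrite inE (subsetP Q'P _ AQ') /= EB; exact: bigcup_sup.
Qed.

Lemma Gq1 p0 A : Gq p0 [set A] = 0.
Proof. rewrite /Gq big_set1 cover1 cards1; ring. Qed.

Lemma card_QB p0 (P : {set {set T}}) B : valid_partition E Sstar P -> coarser P P0 -> B \in P ->
  Gq p0 [set A in P0 | A \subset B] != 0 -> (2 <= #|[set A in P0 | A \subset B]|)%N.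
Proof.
case=> /and3P[_ _ nP] _ coP BP; set Q := [set A in P0 | A \subset B] => nz.
rewrite leqNgt; apply/negP => c1.
have : Q != set0.
  apply: contra (nz_block nP BP) => /eqP Q0.
  by rewrite -(cov_QB coP BP) -/Q Q0 /cover big_set0.
rewrite -card_gt0 => c0.
have /cards1P[A QA] : #|Q| == 1%N by rewrite eqn_leq -ltnS c1 c0.
by move: nz; rewrite QA Gq1 eqxx.
Qed.

Lemma build (Q : {set {set T}}) p0 : Q \subset P0 -> (2 <= #|Q|)%N -> connected_set E (cover Q) ->
  let P := P0 :\: Q :|: [set cover Q] in
  [/\ valid_partition E Sstar P, coarser P P0 &
      \sum_(B in P) Gq p0 [set A in P0 | A \subset B] = Gq p0 Q].
Proof.
move=> QP cQ cQc P; have [cQn0 _] := cQc.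
have inP B : B \in P = ((B \notin Q) && (B \in P0)) || (B == cover Q).
  by rewrite !inE.
have disj B : B \in P0 -> B \notin Q -> [disjoint B & cover Q].
  move=> BP BQ; apply: bigcup_disjoint => A AQ.
  apply: (trivIsetP tP0) => //; first exact: (subsetP QP).
  by apply: contraNneq BQ => ->.
have cP : cover P = ~: Sstar.
  rewrite -cP0 /cover bigcup_setU big_set1; apply/setP => x; rewrite inE.
  apply/orP/bigcupP => [[/bigcupP[A] | /bigcupP[A AQ xA]] | [A AP xA]].
  - by rewrite inE => /andP[_ AP] xA; exists A.
  - by exists A => //; exact: (subsetP QP).
  - case: (boolP (A \in Q)) => AQ; [right | left]; apply/bigcupP; exists A => //.
    by rewrite inE AQ.
have vP : valid_partition E Sstar P.
  split.
    apply/and3P; split; first by rewrite cP.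
      apply/trivIsetP => A B; rewrite !inP.
      case/orP => [/andP[AQ AP] | /eqP ->]; case/orP => [/andP[BQ BP] | /eqP ->] //.
      + by apply: (trivIsetP tP0).
      + by move=> _; apply: disj.
      + by move=> _; rewrite disjoint_sym; apply: disj.
      + by rewrite eqxx.
    rewrite inP negb_or (negbTE nP0) andbF /=; by rewrite eq_sym.
  move=> B; rewrite inP => /orP[/andP[_ BP]|/eqP ->]; last by [].
  by case: vP0 => _; apply.
have coP : coarser P P0.
  move=> B; rewrite inP => /orP[/andP[_ BP]|/eqP ->]; last by exists Q.
  by exists [set B]; rewrite sub1set cover1.
split => //.
have CP : cover Q \in P by rewrite inP eqxx orbT.
rewrite (bigD1 (cover Q)) //= big1 ?addr0.
  congr Gq; apply/setP => A; rewrite inE; apply/andP/idP => [[AP AC]|AQ].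
    exact: sub_block.
  by split; [exact: (subsetP QP) | exact: bigcup_sup].
move=> B /andP[]; rewrite inP => /orP[/andP[BQ BP] _|/eqP -> ]; last by rewrite eqxx.
rewrite (_ : [set A in P0 | A \subset B] = [set B]) ?Gq1 //.
apply/setP => A; rewrite !inE; apply/andP/eqP => [[AP AB]|->]; last by split.
have := @sub_block [set B] A; rewrite sub1set cover1 inE => /(_ BP AP AB) /eqP //.
Qed.

Lemma main_pf :
  ((exists P, [/\ valid_partition E Sstar P, coarser P P0 &
                  percentile mu Sstar P < percentile mu Sstar P0]) <->
   (exists Q : {set {set T}},
      [/\ Q \subset P0, (2 <= #|Q|)%N, connected_set E (cover Q) &
          percentile mu Sstar P0 <
          ((#|large_blocks mu Sstar Q|)%:R + 2^-1 * (#|medium_blocks mu Sstar Q|)%:R - 1)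
          / ((#|Q|)%:R - 1)]))
  /\
  ((exists P, [/\ valid_partition E Sstar P, coarser P P0 &
                  percentile mu Sstar P0 < percentile mu Sstar P]) <->
   (exists Q : {set {set T}},
      [/\ Q \subset P0, (2 <= #|Q|)%N, connected_set E (cover Q) &
          ((#|large_blocks mu Sstar Q|)%:R + 2^-1 * (#|medium_blocks mu Sstar Q|)%:R - 1)
          / ((#|Q|)%:R - 1) < percentile mu Sstar P0])).
Proof.
set p0 := percentile mu Sstar P0.
have p0pos : 0 < p0.
  rewrite /p0 percE divr_gt0 ?ltr0n //.
  have : 0 <= \sum_(A in P0) w A by apply: sumr_ge0 => A _; apply: w_ge0.
  have : 0 < 2^-1 :> R by rewrite invr_gt0 ltr0n.
  move=> h1 h2; lra.
have condQ (Q : {set {set T}}) : (2 <= #|Q|)%N ->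
   (p0 < ((#|large_blocks mu Sstar Q|)%:R + 2^-1 * (#|medium_blocks mu Sstar Q|)%:R - 1)
          / ((#|Q|)%:R - 1) <-> 0 < Fq p0 Q) /\
   (((#|large_blocks mu Sstar Q|)%:R + 2^-1 * (#|medium_blocks mu Sstar Q|)%:R - 1)
          / ((#|Q|)%:R - 1) < p0 <-> Fq p0 Q < 0).
  move=> cQ; have d0 : 0 < (#|Q|)%:R - 1 :> R.
    by rewrite subr_gt0 (_ : 1 = 1%:R) // ltr_nat.
  rewrite sumw ltr_pdivlMr // ltr_pdivrMr // /Fq; split; split => H; lra.
have condP (P : {set {set T}}) : valid_partition E Sstar P -> coarser P P0 ->
   (percentile mu Sstar P < p0 <-> 0 < \sum_(B in P) Gq p0 [set A in P0 | A \subset B]) /\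
   (p0 < percentile mu Sstar P <-> \sum_(B in P) Gq p0 [set A in P0 | A \subset B] < 0).
  move=> vP coP; rewrite sum_G // -/p0 percE ltr_pdivrMr ?ltr0n // ltr_pdivlMr ?ltr0n //.
  split; split => H; lra.
have fromB (P : {set {set T}}) B : valid_partition E Sstar P -> coarser P P0 -> B \in P ->
    Gq p0 [set A in P0 | A \subset B] != 0 ->
    [/\ [set A in P0 | A \subset B] \subset P0, (2 <= #|[set A in P0 | A \subset B]|)%N &
        connected_set E (cover [set A in P0 | A \subset B])].
  move=> vP coP BP nz; split.
  - by apply/subsetP => A; rewrite inE => /andP[].
  - exact: card_QB vP coP BP nz.
  - by rewrite (cov_QB coP BP); case: vP => _; apply.
split; split.
- case=> P [vP coP lt]; have := (condP P vP coP).1.1 lt => H.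
  have [B BP GB] : exists2 B, B \in P & 0 < Gq p0 [set A in P0 | A \subset B].
    case: (boolP [exists B in P, 0 < Gq p0 [set A in P0 | A \subset B]]) => [/exists_inP //|/exists_inPn H'].
    suff : \sum_(B in P) Gq p0 [set A in P0 | A \subset B] <= 0 by rewrite leNgt H.
    by apply: sumr_le0 => B BP; rewrite leNgt H'.
  have [h1 h2 h3] := fromB P B vP coP BP (negbT (gt_eqF GB)).
  exists [set A in P0 | A \subset B]; split => //.
  by apply/(condQ _ h2).1; apply/(sign_GF p0pos h1 h2).1.
- case=> Q [QP c2 cc cond]; have [vP coP sG] := build p0 QP c2 cc.
  eexists; split; [exact: vP | exact: coP |].
  apply/(condP _ vP coP).1; rewrite sG; apply/(sign_GF p0pos QP c2).1; exact/(condQ _ c2).1.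
- case=> P [vP coP lt]; have := (condP P vP coP).2.1 lt => H.
  have [B BP GB] : exists2 B, B \in P & Gq p0 [set A in P0 | A \subset B] < 0.
    case: (boolP [exists B in P, Gq p0 [set A in P0 | A \subset B] < 0]) => [/exists_inP //|/exists_inPn H'].
    suff : 0 <= \sum_(B in P) Gq p0 [set A in P0 | A \subset B] by rewrite leNgt H.
    by apply: sumr_ge0 => B BP; rewrite leNgt H'.
  have [h1 h2 h3] := fromB P B vP coP BP (negbT (lt_eqF GB)).
  exists [set A in P0 | A \subset B]; split => //.
  by apply/(condQ _ h2).2; apply/(sign_GF p0pos h1 h2).2.
- case=> Q [QP c2 cc cond]; have [vP coP sG] := build p0 QP c2 cc.
  eexists; split; [exact: vP | exact: coP |].
  apply/(condP _ vP coP).2; rewrite sG; apply/(sign_GF p0pos QP c2).2; exact/(condQ _ c2).2.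
Qed.

End Pf.

Theorem lemma2p3 (T : finType) (E : rel T) (R : realFieldType)
  (mu : {set T} -> R) (Sstar : {set T}) (P0 : {set {set T}}) :
  reflexive E -> symmetric E ->
  (forall S : {set T}, 0 <= mu S) ->
  (forall S : {set T}, mu S = \sum_(s in S) mu [set s]) ->
  (forall S : {set T}, mu S = 0 -> S = set0) ->
  (connected_set E Sstar \/ Sstar = set0) ->
  valid_partition E Sstar P0 ->
  ((exists P, [/\ valid_partition E Sstar P, coarser P P0 &
                  percentile mu Sstar P < percentile mu Sstar P0]) <->
   (exists Q : {set {set T}},
      [/\ Q \subset P0, (2 <= #|Q|)%N, connected_set E (cover Q) &
          percentile mu Sstar P0 <
          ((#|large_blocks mu Sstar Q|)%:R + 2^-1 * (#|medium_blocks mu Sstar Q|)%:R - 1)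
          / ((#|Q|)%:R - 1)]))
  /\
  ((exists P, [/\ valid_partition E Sstar P, coarser P P0 &
                  percentile mu Sstar P0 < percentile mu Sstar P]) <->
   (exists Q : {set {set T}},
      [/\ Q \subset P0, (2 <= #|Q|)%N, connected_set E (cover Q) &
          ((#|large_blocks mu Sstar Q|)%:R + 2^-1 * (#|medium_blocks mu Sstar Q|)%:R - 1)
          / ((#|Q|)%:R - 1) < percentile mu Sstar P0])).
Proof.
move=> _ _ h1 h2 h3 _ vP0; exact: main_pf.
Qed.
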